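(* Let $\Omega\subset\mathbb H^n$ be an open, horizontally bounded and (Euclidean) convex set. Then $$\mathcal D(\xi)\le\Bigl(\frac{\sqrt[4]{97}}{2}+\frac13\Bigr)\mathrm{dist}_H(\xi,\partial\Omega)\qquad\forall\xi\in\Omega,$$ where $\mathcal D(\xi)=\min\{\mathrm{dist}_H(\zeta,\partial\Omega\cap H_\zeta):\zeta\in\overline{B_H(\xi,\mathrm{dist}_H(\xi,\partial\Omega)/3)}\}$.
   Context: $\mathbb H^n=\mathbb C^n\times\mathbb R\cong\mathbb R^{2n+1}$ with real coordinates $(x,y,t)$, $z=x+iy$, group law $(z,t)\circ(z',t')=(z+z',t+t'+2\,\mathrm{Im}\langle z,z'\rangle)$, $\langle z,z'\rangle=\sum_j z_j\overline{z'_j}$. Horizontal plane at $\xi_0=(x_0,y_0,t_0)$: $H_{\xi_0}=\{(x,y,t):t=t_0+2(x\cdot y_0-x_0\cdot y)\}$. Gauge $N(z,t)=(|z|^4+t^2)^{1/4}$, $d_H(\xi,\zeta)=N(\zeta^{-1}\circ\xi)$, $B_H(\xi,r)=\{\zeta:d_H(\zeta,\xi)<r\}$, $\mathrm{dist}_H(\xi,A)=\inf_{\zeta\in A}d_H(\xi,\zeta)$, $\mathrm{diam}_H$ the $d_H$-diameter; $\Omega$ is horizontally bounded if $\sup\{\mathrm{diam}_H(\Omega\cap H_\xi):\xi\in\Omega\}<\infty$. *)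

(* Defs.v *)
From HB Require Import structures.
From mathcomp Require Import all_boot all_order all_algebra.
From mathcomp Require Import all_classical all_reals.
Set Implicit Arguments. Unset Strict Implicit. Unset Printing Implicit Defensive.
Import Order.TTheory GRing.Theory Num.Theory.
Local Open Scope classical_set_scope.
Local Open Scope ring_scope.

Section Heis.
Variables (R : realType) (n : nat).

(* A point (x, y, t) of H^n = C^n x R = R^(2n+1), z = x + i y. *)
Record hpt := Hpt { hx : 'I_n -> R; hy : 'I_n -> R; ht : R }.

(* group law (z,t) o (z',t') = (z+z', t+t'+2 Im<z,z'>),
   Im <z,z'> = sum_j (y_j x'_j - x_j y'_j) *)
Definition hmul (p q : hpt) : hpt :=
  Hpt (fun j => hx p j + hx q j) (fun j => hy p j + hy q j)
      (ht p + ht q + 2 * \sum_(j < n) (hy p j * hx q j - hx p j * hy q j)).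

Definition hinv (p : hpt) : hpt :=
  Hpt (fun j => - hx p j) (fun j => - hy p j) (- ht p).

Definition znorm2 (p : hpt) : R := \sum_(j < n) (hx p j ^+ 2 + hy p j ^+ 2).

Definition gauge (p : hpt) : R :=
  Num.sqrt (Num.sqrt (znorm2 p ^+ 2 + ht p ^+ 2)).

Definition dH (xi zeta : hpt) : R := gauge (hmul (hinv zeta) xi).

Definition ballH (xi : hpt) (r : R) : set hpt := [set zeta | dH zeta xi < r].

Definition distH (xi : hpt) (A : set hpt) : R := inf [set dH xi zeta | zeta in A].

Definition hplane (xi0 : hpt) : set hpt :=
  [set p | ht p = ht xi0 + 2 * \sum_(j < n) (hx p j * hy xi0 j - hx xi0 j * hy p j)].

Definition eucl2 (p q : hpt) : R :=
  \sum_(j < n) ((hx p j - hx q j) ^+ 2 + (hy p j - hy q j) ^+ 2) + (ht p - ht q) ^+ 2.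

Definition eball (p : hpt) (r : R) : set hpt := [set q | eucl2 p q < r ^+ 2].

Definition eopen (A : set hpt) : Prop :=
  forall p, A p -> exists2 r : R, 0 < r & eball p r `<=` A.

Definition eclosure (A : set hpt) : set hpt :=
  [set p | forall r : R, 0 < r -> exists q, A q /\ eball p r q].

Definition eboundary (A : set hpt) : set hpt :=
  [set p | forall r : R, 0 < r ->
     (exists q, A q /\ eball p r q) /\ (exists q, ~ A q /\ eball p r q)].

Definition econvex (A : set hpt) : Prop :=
  forall p q (l : R), A p -> A q -> 0 <= l -> l <= 1 ->
    A (Hpt (fun j => (1 - l) * hx p j + l * hx q j)
           (fun j => (1 - l) * hy p j + l * hy q j)
           ((1 - l) * ht p + l * ht q)).

Definition hor_bounded (Om : set hpt) : Prop :=
  exists M : R, forall xi, Om xi ->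
    forall a b, (Om `&` hplane xi) a -> (Om `&` hplane xi) b -> dH a b <= M.

Definition calD (Om : set hpt) (xi : hpt) : R :=
  inf [set distH zeta (eboundary Om `&` hplane zeta) | zeta in
        eclosure (ballH xi (distH xi (eboundary Om) / 3))].

End Heis.

(* Main.v *)
Require Import Defs.
From HB Require Import structures.
From mathcomp Require Import all_boot all_order all_algebra.
From mathcomp Require Import all_classical all_reals.
From mathcomp.algebra_tactics Require Import ring lra.
Import Order.TTheory GRing.Theory Num.Theory.
Local Open Scope classical_set_scope.
Local Open Scope ring_scope.

Section S.
Variables (R : realType) (n : nat).
Local Notation hpt := (hpt R n).
Implicit Types (Om : set hpt) (P Q p q : hpt).

Lemma hptE (p q : hpt) : hx p =1 hx q -> hy p =1 hy q -> ht p = ht q -> p = q.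
Proof.
case: p => a b c; case: q => a' b' c' /= H1 H2 ->.
by rewrite (funext H1) (funext H2).
Qed.

Lemma inf_le_elt (E : set R) x : (forall y, E y -> 0 <= y) -> E x -> inf E <= x.
Proof. move=> h Ex; apply: (ge_inf _ Ex); by exists 0 => y /h. Qed.

Lemma inf_ge0 (E : set R) : (forall y, E y -> 0 <= y) -> 0 <= inf E.
Proof.
move=> h; have [->|hE] := eqVneq E set0; first by rewrite inf0.
have /set0P [x Ex] := hE.
apply: lb_le_inf; first by exists x. by move=> y /h.
Qed.

Lemma gauge_ge0 (p : hpt) : 0 <= gauge p. Proof. exact: sqrtr_ge0. Qed.
Lemma dH_ge0 (p q : hpt) : 0 <= dH p q. Proof. exact: gauge_ge0. Qed.

Lemma distH_ge0 (xi : hpt) (A : set hpt) : 0 <= distH xi A.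
Proof. by apply: inf_ge0 => y [z _ <-]; apply: dH_ge0. Qed.

Lemma distH_le (xi : hpt) (A : set hpt) z : A z -> distH xi A <= dH xi z.
Proof. by move=> Az; apply: inf_le_elt; [move=> y [w _ <-]; apply: dH_ge0| exists z]. Qed.


Definition seg (P Q : hpt) (s : R) : hpt :=
  Hpt (fun j => (1 - s) * hx P j + s * hx Q j)
      (fun j => (1 - s) * hy P j + s * hy Q j)
      ((1 - s) * ht P + s * ht Q).

Lemma seg0 P Q : seg P Q 0 = P.
Proof. by apply: hptE => [j|j|] /=; ring. Qed.
Lemma seg1 P Q : seg P Q 1 = Q.
Proof. by apply: hptE => [j|j|] /=; ring. Qed.

Lemma eucl2_seg P Q s s' :
  eucl2 (seg P Q s) (seg P Q s') = (s - s') ^+ 2 * eucl2 P Q.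
Proof.
rewrite /eucl2 /= mulrDr big_distrr /=; congr (_ + _); last by ring.
by apply: eq_bigr => j _; ring.
Qed.

Lemma eucl2_ge0 (P Q : hpt) : 0 <= eucl2 P Q.
Proof.
rewrite /eucl2; apply: addr_ge0; last exact: sqr_ge0.
by apply: sumr_ge0 => j _; apply: addr_ge0; apply: sqr_ge0.
Qed.

Lemma bd_notin Om p : eopen Om -> eboundary Om p -> ~ Om p.
Proof.
move=> op bd Op; have [r r0 sub] := op p Op.
by have [_ [q [nq bq]]] := bd r r0; apply: nq; apply: sub.
Qed.

Lemma seg_boundary Om P Q : econvex Om -> Om P -> ~ Om Q ->
  exists s, [/\ 0 <= s, s <= 1 & eboundary Om (seg P Q s)].
Proof.
move=> cv OP nOQ.
pose S := [set s : R | 0 <= s /\ s <= 1 /\ Om (seg P Q s)].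
have S0 : S 0 by split => //; split => //; rewrite seg0.
have ubS : has_ubound S by exists 1 => s [_ []].
have hS : has_sup S by split => //; exists 0.
have s1 : sup S <= 1 by apply: ge_sup; [exists 0| move=> s [_ []]].
have s0 : 0 <= sup S by apply: sup_upper_bound.
exists (sup S); split => // r r0.
set E := eucl2 P Q.
have E0 : 0 <= E by apply: eucl2_ge0.
pose del := r / Num.sqrt (E + 1).
have sq0 : 0 < Num.sqrt (E + 1) by rewrite sqrtr_gt0; lra.
have del0 : 0 < del by rewrite divr_gt0.
have key : forall s', `|s' - sup S| < del -> eucl2 (seg P Q (sup S)) (seg P Q s') < r ^+ 2.
  move=> s' hs; rewrite eucl2_seg.
  have h1 : (sup S - s') ^+ 2 < del ^+ 2.
    by move: hs; rewrite ltr_norml => /andP [ha hb]; nra.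
  have h2 : del ^+ 2 * (E + 1) = r ^+ 2.
    rewrite /del expr_div_n sqr_sqrtr; last lra.
    by rewrite mulfVK // gt_eqF //; lra.
  have h3 : (sup S - s') ^+ 2 * E <= del ^+ 2 * E by rewrite ler_wpM2r // ltW.
  have h4 : 0 < del ^+ 2 by rewrite exprn_gt0.
  rewrite -h2; have -> : del ^+ 2 * (E + 1) = del ^+ 2 * E + del ^+ 2 by ring.
  rewrite -/E; lra.
split.
  have [e Se he] := sup_adherent del0 hS.
  exists (seg P Q e); split; first by case: Se => _ [].
  apply: key; rewrite ler0_norm; last by move: (sup_upper_bound hS Se); lra.
  rewrite -/E; lra.
have [e1|s1'] := eqVneq (sup S) 1.
  exists Q; split => //; have := key 1; rewrite seg1 e1 subrr normr0 => /(_ del0).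
  by [].
have slt : sup S < 1 by rewrite lt_neqAle s1' s1.
pose s' := Order.min 1 (sup S + del / 2).
have hs'1 : s' <= 1 by rewrite ge_min lexx.
have hs'2 : sup S < s' by rewrite lt_min slt /=; lra.
have hs'3 : s' <= sup S + del / 2 by rewrite ge_min lexx orbT.
exists (seg P Q s'); split.
  move=> Os'; have : S s' by split; [lra|split].
  by move/(sup_upper_bound hS); lra.
apply: key; rewrite gtr0_norm; lra.
Qed.

Definition escale (s : R) p : hpt := Hpt (fun j => s * hx p j) (fun j => s * hy p j) (s * ht p).

Lemma inv_seg P Q s : hmul (hinv (seg P Q s)) P = escale s (hmul (hinv Q) P).
Proof.
apply: hptE => [j|j|] /=; try ring.
rewrite (eq_bigr (fun j => s * (- hy Q j * hx P j - - hx Q j * hy P j))); last by move=> j _; ring.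
rewrite -big_distrr /=; ring.
Qed.

Lemma gauge_escale s p : 0 <= s -> s <= 1 -> gauge (escale s p) <= gauge p.
Proof.
move=> s0 s1; rewrite /gauge ler_sqrt ?sqrtr_ge0 // ler_sqrt; last first.
  by apply: addr_ge0; apply: sqr_ge0.
have -> : znorm2 (escale s p) = s ^+ 2 * znorm2 p.
  rewrite /znorm2 big_distrr; apply: eq_bigr => j _ /=; ring.
have z0 : 0 <= znorm2 p by apply: sumr_ge0 => j _; apply: addr_ge0; apply: sqr_ge0.
rewrite /=.
have a1 : s ^+ 2 <= 1 by nra.
have a2 : 0 <= s ^+ 2 by apply: sqr_ge0.
have a3 : (s ^+ 2 * znorm2 p) ^+ 2 <= znorm2 p ^+ 2.
  rewrite exprMn; have : s ^+ 2 ^+ 2 <= 1 by nra.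
  have : 0 <= znorm2 p ^+ 2 by apply: sqr_ge0. nra.
have a4 : (s * ht p) ^+ 2 <= ht p ^+ 2.
  rewrite exprMn; have : 0 <= ht p ^+ 2 by apply: sqr_ge0. nra.
lra.
Qed.

Lemma dH_seg P Q s : 0 <= s -> s <= 1 -> dH P (seg P Q s) <= dH P Q.
Proof. by move=> s0 s1; rewrite /dH inv_seg; apply: gauge_escale. Qed.

Lemma ball_in Om xi p : econvex Om -> Om xi ->
  dH xi p < distH xi (eboundary Om) -> Om p.
Proof.
move=> cv Ox hp; apply/not_notP => nO.
have [s [s0 s1 bd]] := seg_boundary _ _ _ cv Ox nO.

have := distH_le xi _ _ bd; have := dH_seg xi p s s0 s1; lra.
Qed.


Lemma left_inv (g a b : hpt) : hmul (hinv (hmul g b)) (hmul g a) = hmul (hinv b) a.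
Proof.
apply: hptE => [j|j|] /=; try ring.
set S1 := \sum_(j < n) (hy g j * hx b j - hx g j * hy b j).
set S2 := \sum_(j < n) (hy g j * hx a j - hx g j * hy a j).
rewrite (_ : \sum_(j < n) _ = \sum_(j < n) (- hy b j * hx a j - - hx b j * hy a j) + S1 - S2).
  ring.
rewrite /S1 /S2 -big_split -sumrB /=; apply: eq_bigr => j _; ring.
Qed.

Lemma mul_inv (g w : hpt) : hmul g (hmul (hinv g) w) = w.
Proof.
apply: hptE => [j|j|] /=; try ring.
rewrite (_ : \sum_(j < n) (hy g j * (- hx g j + hx w j) - hx g j * (- hy g j + hy w j)) = - \sum_(j < n) (- hy g j * hx w j - - hx g j * hy w j)).
  ring.
rewrite -sumrN; apply: eq_bigr => j _; ring.
Qed.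

Lemma hplaneE (z P : hpt) : hplane z P <-> ht (hmul (hinv z) P) = 0.
Proof.
rewrite /hplane /=.
have -> : \sum_(j < n) (- hy z j * hx P j - - hx z j * hy P j) =
   - \sum_(j < n) (hx P j * hy z j - hx z j * hy P j).
  rewrite -sumrN; apply: eq_bigr => j _; ring.
split => h; [rewrite h; ring | lra].
Qed.

Variables (xi : hpt) (d s : R) (E1 E2 : 'I_n -> R).
Hypothesis (Eu : \sum_(j < n) (E1 j ^+ 2 + E2 j ^+ 2) = 1) (s2 : s ^+ 2 = 1) (d0 : 0 <= d).

Definition Vv (x y t : R) : hpt :=
  Hpt (fun j => d * (x * E1 j + y * (- s * E2 j))) (fun j => d * (x * E2 j + y * (s * E1 j)))
      (s * d ^+ 2 * t).

Definition Am x y t := hmul xi (Vv x y t).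

Lemma Vdiff xp yp tp xq yq tq :
  hmul (hinv (Vv xq yq tq)) (Vv xp yp tp) =
  Vv (xp - xq) (yp - yq) (tp - tq + 2 * (xq * yp - yq * xp)).
Proof.
apply: hptE => [j|j|] /=; try ring.
rewrite (_ : \sum_(j < n) _ = (s * d ^+ 2 * (xq * yp - yq * xp)) * \sum_(j < n) (E1 j ^+ 2 + E2 j ^+ 2)).
  rewrite Eu; ring.
rewrite big_distrr; apply: eq_bigr => j _ /=.
ring.
Qed.

Definition g1 (x y t : R) := Num.sqrt (Num.sqrt ((x ^+ 2 + y ^+ 2) ^+ 2 + t ^+ 2)).

Lemma gaugeV x y t : gauge (Vv x y t) = d * g1 x y t.
Proof.
rewrite /gauge /g1.
have -> : znorm2 (Vv x y t) = d ^+ 2 * (x ^+ 2 + y ^+ 2).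
  rewrite /znorm2 /= (_ : \sum_(j < n) _ = d ^+ 2 * (x ^+ 2 + y ^+ 2) * \sum_(j < n) (E1 j ^+ 2 + E2 j ^+ 2)).
    by rewrite Eu mulr1.
  rewrite big_distrr; apply: eq_bigr => j _ /=.
  have e : y ^+ 2 = s ^+ 2 * y ^+ 2 by rewrite s2 mul1r.
  rewrite [in RHS]e; ring.
rewrite /= (_ : _ + _ = (d ^+ 2) ^+ 2 * ((x ^+ 2 + y ^+ 2) ^+ 2 + t ^+ 2)); last first.
  have e : t ^+ 2 = s ^+ 2 * t ^+ 2 by rewrite s2 mul1r.
  rewrite [in RHS]e; ring.
have X0 : 0 <= (x ^+ 2 + y ^+ 2) ^+ 2 + t ^+ 2 by apply: addr_ge0; apply: sqr_ge0.
rewrite sqrtrM ?sqr_ge0 // sqrtr_sqr ger0_norm ?sqr_ge0 //.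
by rewrite sqrtrM ?sqr_ge0 // sqrtr_sqr ger0_norm.
Qed.

Lemma dAm xp yp tp xq yq tq :
  dH (Am xp yp tp) (Am xq yq tq) = d * g1 (xp - xq) (yp - yq) (tp - tq + 2 * (xq * yp - yq * xp)).
Proof. by rewrite /dH /Am left_inv Vdiff gaugeV. Qed.

Lemma plAm xz yz tz xq yq tq : tq - tz + 2 * (xz * yq - yz * xq) = 0 ->
  hplane (Am xz yz tz) (Am xq yq tq).
Proof. by move=> h; rewrite hplaneE /Am left_inv Vdiff /= h mulr0. Qed.

Lemma segAm l xp yp tp xq yq tq :
  seg (Am xp yp tp) (Am xq yq tq) l =
  Am ((1 - l) * xp + l * xq) ((1 - l) * yp + l * yq) ((1 - l) * tp + l * tq).
Proof.
apply: hptE => [j|j|] /=; try ring.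
set Sp := \sum_(j < n) _.
set Sq := \sum_(j < n) _.
set Sm := \sum_(j < n) _.
rewrite (_ : Sm = (1 - l) * Sp + l * Sq); first ring.
rewrite /Sm /Sp /Sq !big_distrr -big_split; apply: eq_bigr => j _ /=; ring.
Qed.

Lemma Am0 : Am 0 0 0 = xi.
Proof.
apply: hptE => [j|j|] /=; try ring.
rewrite big1; [ring | move=> j _; ring].
Qed.

End S.

Arguments g1 {R}.
Section S2.
Variable R : realType.

Lemma sqrt_le (X c : R) : 0 <= c -> X <= c ^+ 2 -> Num.sqrt X <= c.
Proof.
move=> c0 h; rewrite -(ger0_norm c0) -sqrtr_sqr ler_sqrt //; exact: sqr_ge0.
Qed.

Lemma le_sqrt (X a : R) : 0 <= a -> a ^+ 2 <= X -> a <= Num.sqrt X.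
Proof.
move=> a0 h; rewrite -(ger0_norm a0) -sqrtr_sqr ler_sqrt //.
exact: le_trans (sqr_ge0 _) h.
Qed.

Lemma g1_t0 (x y t : R) : t = 0 -> g1 x y t = Num.sqrt (x ^+ 2 + y ^+ 2).
Proof.
move=> ->; rewrite /g1 expr0n /= addr0 sqrtr_sqr ger0_norm //.
by apply: addr_ge0; apply: sqr_ge0.
Qed.

Lemma g1_lt (x y t K : R) : 0 <= K -> g1 x y t < K -> (x ^+ 2 + y ^+ 2) ^+ 2 + t ^+ 2 < K ^+ 4.
Proof.
move=> K0 h; rewrite ltNge; apply/negP => hK.
have : K <= g1 x y t.
  rewrite /g1; apply: le_sqrt => //; apply: le_sqrt; first exact: sqr_ge0.
  by rewrite -exprM.
by rewrite leNgt h.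
Qed.

Lemma g1_lt1 (x y t : R) : (x ^+ 2 + y ^+ 2) ^+ 2 + t ^+ 2 < 1 -> g1 x y t < 1.
Proof.
move=> h; rewrite /g1 -sqrtr1 ltr_sqrt // -sqrtr1 ltr_sqrt //.
Qed.

Lemma c_bound : 36 / 10 <= (Num.sqrt (Num.sqrt (97 : R)) / 2 + 3^-1) ^+ 2.
Proof.
have h : 313 / 100 <= Num.sqrt (Num.sqrt (97 : R)).
  apply: le_sqrt; first lra.
  apply: le_sqrt; first nra.
  rewrite -exprM /=; lra.
have h3 : (3 : R)^-1 = 1 / 3 by rewrite mul1r.
rewrite h3; nra.
Qed.

Lemma c_ge0 : 0 <= (Num.sqrt (Num.sqrt (97 : R)) / 2 + 3^-1).
Proof.
apply: addr_ge0; last by rewrite invr_ge0; lra.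
by apply: divr_ge0; [apply: sqrtr_ge0| lra].
Qed.

End S2.

Lemma unit_e (R : realType) (n : nat) : (0 < n)%N ->
  \sum_(j < n) ((((nat_of_ord j == 0)%N)%:R : R) ^+ 2 + (0 : R) ^+ 2) = 1.
Proof.
case: n => [//|n'] _.
rewrite big_ord_recl /= big1 => [|i _] /=.
  by rewrite expr1n expr0n /= !addr0.
by rewrite expr0n /= add0r.
Qed.

Lemma decomp (R : realType) (n : nat) (n0 : (0 < n)%N) (W : hpt R n) (d : R) (d0 : 0 < d) :
  exists s (E1 E2 : 'I_n -> R) r T,
    [/\ \sum_(j < n) (E1 j ^+ 2 + E2 j ^+ 2) = 1, s ^+ 2 = 1, 0 <= r, 0 <= T &
        W = Vv R n d s E1 E2 r 0 T].
Proof.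
pose s : R := if 0 <= ht W then 1 else -1.
have s2 : s ^+ 2 = 1 by rewrite /s; case: ifP => _; rewrite ?expr1n ?sqrrN ?expr1n.
pose T := s * ht W / d ^+ 2.
have dd : 0 < d ^+ 2 by rewrite exprn_gt0.
have T0 : 0 <= T.
  apply: divr_ge0; last exact: ltW.
  rewrite /s; case: ifP => h; first by rewrite mul1r.
  by rewrite mulN1r oppr_ge0 ltW // ltNge h.
have Tt : s * d ^+ 2 * T = ht W.
  rewrite /T; have e : s * s = 1 by rewrite -expr2.
  rewrite -[RHS]mul1r -e; field; by rewrite gt_eqF.
set z := znorm2 W.
have z0 : 0 <= z by apply: sumr_ge0 => j _; apply: addr_ge0; apply: sqr_ge0.
have [zz|zn] := eqVneq z 0.
  have hz : forall j, hx W j ^+ 2 + hy W j ^+ 2 = 0.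
    move=> j; apply: (psumr_eq0P _ zz) => // i _; apply: addr_ge0; apply: sqr_ge0.
  have hx0 : forall j, hx W j = 0.
    move=> j; have := hz j; have := sqr_ge0 (hx W j); have := sqr_ge0 (hy W j).
    by move=> a b c; apply/eqP; rewrite -sqrf_eq0; apply/eqP; lra.
  have hy0 : forall j, hy W j = 0.
    move=> j; have := hz j; have := sqr_ge0 (hx W j); have := sqr_ge0 (hy W j).
    by move=> a b c; apply/eqP; rewrite -sqrf_eq0; apply/eqP; lra.
  exists s, (fun j => ((nat_of_ord j == 0)%N)%:R), (fun _ => 0), 0, T; split => //.
    exact: unit_e.
  apply: hptE => [j|j|] /=; rewrite ?hx0 ?hy0 ?Tt //; ring.
have zp : 0 < z by rewrite lt_neqAle eq_sym zn.
set rho := Num.sqrt z.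
have rp : 0 < rho by rewrite sqrtr_gt0.
have r2 : rho ^+ 2 = z by rewrite sqr_sqrtr.
exists s, (fun j => hx W j / rho), (fun j => hy W j / rho), (rho / d), T; split => //.
- rewrite (_ : \sum_(j < n) _ = z / rho ^+ 2); first by rewrite r2 divff ?gt_eqF.
  rewrite /z /znorm2 mulr_suml; apply: eq_bigr => j _; rewrite !expr_div_n; field.
  by rewrite gt_eqF.
- by apply: divr_ge0; apply: ltW.
apply: hptE => [j|j|] /=; rewrite ?Tt //; field; rewrite ?gt_eqF //.
Qed.

Lemma g1_val (R : realType) (x y t a : R) : 0 <= a -> x ^+ 2 + y ^+ 2 = a ^+ 2 -> t = 0 -> g1 x y t = a.
Proof. by move=> a0 e t0; rewrite g1_t0 // e sqrtr_sqr ger0_norm. Qed.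

Lemma eucl2_0 (R : realType) (n : nat) (p : hpt R n) : eucl2 p p = 0.
Proof.
rewrite /eucl2 big1 => [|j _]; first by rewrite subrr expr0n /= addr0.
by rewrite !subrr expr0n /= addr0.
Qed.


Section Num.
Variable R : realType.

Lemma L_cd (d c X : R) : 0 < d -> 0 <= c -> 36 / 10 <= c ^+ 2 -> X <= 36 / 10 ->
  d * Num.sqrt X <= c * d.
Proof.
move=> d0 c0 c2 hX; rewrite mulrC ler_pM2r //; apply: sqrt_le => //.
exact: le_trans hX c2.
Qed.

Lemma L_div (d g K : R) : 0 < d -> d * g < d + d / 1000 -> g < 1001 / 1000.
Proof.
move=> d0 h; rewrite -(ltr_pM2l d0).
have e : d * (1001 / 1000) = d + d / 1000 by field.
by rewrite e.
Qed.

Lemma L_310 (d : R) : 0 < d -> d * (3 / 10) < d / 3.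
Proof. move=> d0; lra. Qed.
Lemma L_310' (d : R) : 0 < d -> d * (3 / 10) < d.
Proof. move=> d0; lra. Qed.
Lemma L_le310 (d b : R) : 0 < d -> b <= 3 / 10 -> d * b < d / 3.
Proof. move=> d0 h; have := ler_wpM2l (ltW d0) h; lra. Qed.

Lemma L_H4 (r T : R) : 0 <= r -> 0 <= T -> r ^+ 4 + T ^+ 2 < (1001 / 1000) ^+ 4 ->
  T <= 1004 / 1000 /\ r <= 1004 / 1000.
Proof.
move=> r0 T0 H4.
have r4 : 0 <= r ^+ 4 by rewrite exprn_ge0.
have e : (1001 / 1000 : R) ^+ 4 <= 1007 / 1000.
  have a2 : (1001 / 1000 : R) ^+ 2 <= 1003 / 1000 by rewrite expr2; lra.
  have a0 : 0 <= (1001 / 1000 : R) ^+ 2 by apply: sqr_ge0.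
  rewrite (_ : 4 = 2 * 2)%N // exprM.
  have : ((1001 / 1000 : R) ^+ 2) ^+ 2 <= (1003 / 1000) ^+ 2.
    by rewrite !expr2; apply: ler_pM.
  have h2 : (1003 / 1000 : R) ^+ 2 <= 1007 / 1000 by rewrite expr2; lra.
  move=> h; exact: le_trans h h2.
have sq : forall x : R, 0 <= x -> x ^+ 2 < 1007 / 1000 -> x <= 1004 / 1000.
  move=> x x0 hx; rewrite leNgt; apply/negP => h.
  have : 1004 / 1000 * (1004 / 1000) < x * x by apply: ltr_pM => //; lra.
  rewrite -expr2; lra.
have r2 : 0 <= r ^+ 2 by apply: sqr_ge0.
have e4 : r ^+ 4 = (r ^+ 2) ^+ 2 by rewrite -exprM.
split; first by apply: sq => //; lra.
have T2 : 0 <= T ^+ 2 by apply: sqr_ge0.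
have r2b : r ^+ 2 <= 1004 / 1000 by apply: sq => //; lra.
apply: sq => //; lra.

Qed.

Lemma L_c1 (r T : R) : 0 <= r -> 0 <= T -> T <= 3 / 5 * r -> r <= 1004 / 1000 ->
  [/\ T = 2 * (T / (2 * r)) * r, 0 <= T / (2 * r), T / (2 * r) <= 3 / 10 &
     (0 - r) ^+ 2 + (T / (2 * r) - 0) ^+ 2 <= 36 / 10].
Proof.
move=> r0 T0 h1 hr.
have [Tb b0 b1] : [/\ T = 2 * (T / (2 * r)) * r, 0 <= T / (2 * r) & T / (2 * r) <= 3 / 10].
  have [rz|rp] := eqVneq r 0.
    have Tz : T = 0 by move: h1; rewrite rz mulr0; lra.
    by rewrite rz Tz !mul0r !mulr0; split => //; lra.
  have rp' : 0 < r by rewrite lt_neqAle eq_sym rp.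
  split; first by field.
    by apply: divr_ge0 => //; lra.
  by rewrite ler_pdivrMr; lra.
split => //.
set b := T / (2 * r).
have -> : (0 - r) ^+ 2 + (b - 0) ^+ 2 = r * r + b * b by ring.
have : r * r <= 1004 / 1000 * (1004 / 1000) by apply: ler_pM.
have : b * b <= 3 / 10 * (3 / 10) by apply: ler_pM.
lra.
Qed.

Lemma L_c2 (r T : R) : 0 <= r -> 3 / 5 * r < T -> T <= 1004 / 1000 ->
  let l := (T - 3 / 5 * r) / (57 / 50) in
  let qx := (r + l / 4) / (1 - l) in
  let qt := (T - l * (99 / 100)) / (1 - l) in
  [/\ 0 <= l, l <= 1, qt - 3 / 5 * qx = 0,
      (1 - l) * qx + l * - (1 / 4) = r &
      [/\ (1 - l) * qt + l * (99 / 100) = T, 0 <= qx & qx <= 187 / 100]].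
Proof.
move=> r0 h2 hT l qx qt.
have hl : 57 / 50 * l = T - 3 / 5 * r by rewrite /l; field.
have l0 : 0 <= l by rewrite /l; apply: divr_ge0; lra.
have l1 : l < 1 by rewrite /l ltr_pdivrMr; lra.
have l1' : 1 - l != 0 by rewrite subr_eq0 eq_sym lt_eqF.
split => //; first exact: ltW.
- have -> : qt - 3 / 5 * qx = (T - 3 / 5 * r - 57 / 50 * l) / (1 - l)
    by rewrite /qt /qx; field.
  by rewrite hl subrr mul0r.
- by rewrite /qx; field.
split; first by rewrite /qt; field.
  by rewrite /qx; apply: divr_ge0; lra.
by rewrite /qx ler_pdivrMr; lra.
Qed.

Lemma L_hX (s' qx : R) : 0 <= s' -> s' <= 1 -> 0 <= qx -> qx <= 187 / 100 ->
  (0 - ((1 - s') * 0 + s' * qx)) ^+ 2 + (3 / 10 - ((1 - s') * (3 / 10) + s' * 0)) ^+ 2 <= 36 / 10.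
Proof.
move=> s0' s1' qx0 qx1.
have -> : (0 - ((1 - s') * 0 + s' * qx)) ^+ 2 + (3 / 10 - ((1 - s') * (3 / 10) + s' * 0)) ^+ 2
   = (s' * qx) * (s' * qx) + (3 / 10 * s') * (3 / 10 * s') by ring.
have a1 : s' * qx <= 187 / 100.
  have : s' * qx <= 1 * qx by apply: ler_wpM2r.
  lra.
have : (s' * qx) * (s' * qx) <= 187 / 100 * (187 / 100).
  by apply: ler_pM => //; apply: mulr_ge0.
have : (3 / 10 * s') * (3 / 10 * s') <= 3 / 10 * (3 / 10).
  by apply: ler_pM; (try apply: mulr_ge0); lra.
lra.
Qed.

Lemma L_p' : ((0 - - (1 / 4)) ^+ 2 + (0 - 0) ^+ 2) ^+ 2 +
      (0 - 99 / 100 + 2 * (- (1 / 4) * 0 - 0 * 0)) ^+ 2 < 1 :> R.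
Proof.
have -> : ((0 - - (1 / 4)) ^+ 2 + (0 - 0) ^+ 2) ^+ 2 +
      (0 - 99 / 100 + 2 * (- (1 / 4) * 0 - 0 * 0)) ^+ 2 = 1 / 256 + 9801 / 10000 :> R by field.
lra.
Qed.

End Num.

Theorem proposition4p4 (R : realType) (n : nat) (Om : set (hpt R n)) :
  (0 < n)%N -> eopen Om -> hor_bounded Om -> econvex Om ->
  forall xi : hpt R n, Om xi ->
    calD Om xi <=
      (Num.sqrt (Num.sqrt (97 : R)) / 2 + 3^-1) * distH xi (eboundary Om).
Proof.
move=> n0 op hb cv xi Oxi.
set d := distH xi (eboundary Om).
set c := (Num.sqrt (Num.sqrt (97 : R)) / 2 + 3^-1).
have c0 : 0 <= c := c_ge0 R.
have c2 : 36 / 10 <= c ^+ 2 := c_bound R.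
have d0 : 0 <= d := distH_ge0 _ _ _ _.
have cD : forall zeta, eclosure (ballH xi (d / 3)) zeta ->
    calD Om xi <= distH zeta (eboundary Om `&` hplane zeta).
  move=> z hz; apply: inf_le_elt; last by exists z.
  by move=> y [z' _ <-]; apply: distH_ge0.
have inB : forall zeta, dH zeta xi < d / 3 -> eclosure (ballH xi (d / 3)) zeta.
  move=> z h r r0; exists z; split => //.
  by rewrite /eball /= eucl2_0 exprn_gt0.
have [dz|dpos] : d = 0 \/ 0 < d.
  by move: d0; rewrite le_eqVlt => /orP [/eqP ->|->]; [left|right].
  have -> : calD Om xi = 0.
    rewrite /calD -/d dz (_ : eclosure _ = set0) ?image_set0 ?inf0 //.
    apply/seteqP; split => z // /(_ 1 ltr01) [q [hq _]]; move: hq.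
    by rewrite /ballH /= mul0r; have := dH_ge0 _ _ q xi; lra.
  by rewrite dz mulr0.
have hinf : has_inf [set dH xi z | z in eboundary Om].
  split; last by exists 0 => y [z _ <-]; apply: dH_ge0.
  apply/set0P/eqP => e; move: dpos; rewrite /d /distH e inf0; lra.
have [_ [w bw <-] hw] := inf_adherent (eps := d / 1000) ltac:(by apply: divr_gt0) hinf.
rewrite -/(distH xi (eboundary Om)) -/d in hw.
set W := hmul (hinv xi) w.
have [s [E1 [E2 [r [T [Eu s2 r0 T0 eW]]]]]] := decomp R n n0 W d dpos.
have dd := ltW dpos.
have ew : w = Am R n xi d s E1 E2 r 0 T by rewrite /Am -eW /W mul_inv.
have DA := dAm R n xi d s E1 E2 Eu s2 dd.
have dxA : forall x y t, dH xi (Am R n xi d s E1 E2 x y t) =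
    d * g1 (0 - x) (0 - y) (0 - t + 2 * (x * 0 - y * 0)).
  by move=> x y t; rewrite -{1}(Am0 R n xi d s E1 E2) DA.
have dAx : forall x y t, dH (Am R n xi d s E1 E2 x y t) xi =
    d * g1 (x - 0) (y - 0) (t - 0 + 2 * (0 * y - 0 * x)).
  by move=> x y t; rewrite -{2}(Am0 R n xi d s E1 E2) DA.
have [hT hr] : T <= 1004 / 1000 /\ r <= 1004 / 1000.
  apply: L_H4 => //.
  move: hw; rewrite ew dxA => /(L_div _ _ _ 0 dpos) h'.
  have := g1_lt R _ _ _ _ (ltac:(lra) : (0:R) <= 1001/1000) h'.
  by have -> : ((0 - r) ^+ 2 + (0 - 0) ^+ 2) ^+ 2 + (0 - T + 2 * (r * 0 - 0 * 0)) ^+ 2 =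
     r ^+ 4 + T ^+ 2 by ring.
have [h1|h2] := lerP T (3 / 5 * r).
-
  have [Tb b0 b1 hX] := L_c1 R r T r0 T0 h1 hr.
  set b := T / (2 * r) in Tb b0 b1 hX.
  pose zeta := Am R n xi d s E1 E2 0 b 0.
  have Bz : dH zeta xi < d / 3.
    rewrite /zeta dAx (g1_val R _ _ _ b) //; first exact: L_le310.
      by ring.
    by ring.
  have pl : hplane zeta w.
    by rewrite ew /zeta; apply: plAm => //; rewrite [in X in X - _]Tb; ring.
  have hd := distH_le R n zeta (eboundary Om `&` hplane zeta) w (conj bw pl).
  apply: le_trans (cD zeta (inB zeta Bz)) _.
  apply: le_trans hd _.
  rewrite ew /zeta DA g1_t0; last by rewrite [in X in 0 - X]Tb; ring.
  exact: L_cd.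
-
  pose zeta := Am R n xi d s E1 E2 0 (3 / 10) 0.
  pose p' := Am R n xi d s E1 E2 (- (1 / 4)) 0 (99 / 100).
  have Oz : Om zeta.
    apply: (ball_in R n Om xi zeta cv Oxi); rewrite -/d /zeta dxA.
    rewrite (g1_val R _ _ _ (3 / 10)); first exact: L_310'.
    - by apply: divr_ge0.
    - by ring.
    - by ring.
  have Op : Om p'.
    apply: (ball_in R n Om xi p' cv Oxi); rewrite -/d /p' dxA.
    rewrite -[X in _ < X]mulr1 ltr_pM2l //; apply: g1_lt1; exact: L_p'.
  have [l0 l1 kq e1 [e2 qx0 qx1]] := L_c2 R r T r0 h2 hT.
  set l := (T - 3 / 5 * r) / (57 / 50) in l0 l1 kq e1 e2 qx0 qx1.
  set qx := (r + l / 4) / (1 - l) in kq e1 qx0 qx1.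
  set qt := (T - l * (99 / 100)) / (1 - l) in kq e2.
  clearbody qt qx l.
  pose q := Am R n xi d s E1 E2 qx 0 qt.
  have nOq : ~ Om q.
    move=> Oq.
    have hw' : Om (seg R n q p' l) := cv q p' l Oq Op l0 l1.
    move: hw'; rewrite /q /p' segAm e1 e2.
    have -> : (1 - l) * 0 + l * 0 = 0 :> R by ring.
    by rewrite -ew; apply: bd_notin.
  have [s' [s0' s1' bb]] := seg_boundary R n Om zeta q cv Oz nOq.
  move: bb; rewrite /zeta /q segAm => bb.
  have pl : hplane zeta (Am R n xi d s E1 E2 ((1 - s') * 0 + s' * qx)
        ((1 - s') * (3 / 10) + s' * 0) ((1 - s') * 0 + s' * qt)).
    rewrite /zeta; apply: plAm => //.
    by transitivity (s' * (qt - 3 / 5 * qx)); [field | rewrite kq mulr0].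
  have hd := distH_le R n zeta (eboundary Om `&` hplane zeta) _ (conj bb pl).
  have Bz : dH zeta xi < d / 3.
    rewrite /zeta dAx (g1_val R _ _ _ (3 / 10)); first exact: L_310.
    - by apply: divr_ge0.
    - by ring.
    - by ring.
  apply: le_trans (cD zeta (inB zeta Bz)) _.
  apply: le_trans hd _.
  rewrite /zeta DA g1_t0; last first.
    by transitivity (- s' * (qt - 3 / 5 * qx)); [field | rewrite kq mulr0].
  by apply: L_cd => //; apply: L_hX.
Qed.
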